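(* Let $V$ be a space which is not CM. Then $V$ has only finitely many rational angles.
   Context: A space is a $2$-dimensional $\mathbb{Q}$-vector subspace $V\subset\mathbb{C}$ containing two $\mathbb{R}$-linearly independent vectors. $V$ is CM if there is $\lambda\in\mathbb{C}\setminus\mathbb{Q}$ with $\lambda V\subseteq V$. A rational angle of $V$ is an ordered pair of distinct lines through $0$, $(\mathbb{R}v_1,\mathbb{R}v_2)$ with $v_1,v_2\in V\setminus\{0\}$, $v_2/v_1\notin\mathbb{R}$, such that $\arg(v_2/v_1)$ is a rational multiple of $\pi$. *)

(* Defs.v *)
From Stdlib Require Import Reals List QArith.
From Coquelicot Require Import Coquelicot.
Open Scope C_scope.

Definition is_rat (x : R) : Prop := exists q : Q, x = Q2R q.

Definition is_Q_subspace (V : C -> Prop) : Prop :=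
  V 0 /\ (forall u v, V u -> V v -> V (u + v)) /\
  (forall (a : R) u, is_rat a -> V u -> V (RtoC a * u)).

Definition Q_dim2 (V : C -> Prop) : Prop :=
  exists w1 w2 : C, V w1 /\ V w2 /\
    (forall a b : R, is_rat a -> is_rat b ->
       RtoC a * w1 + RtoC b * w2 = 0 -> a = 0%R /\ b = 0%R) /\
    (forall v, V v -> exists a b : R, is_rat a /\ is_rat b /\
       v = RtoC a * w1 + RtoC b * w2).

Definition R_indep (u v : C) : Prop :=
  forall a b : R, RtoC a * u + RtoC b * v = 0 -> a = 0%R /\ b = 0%R.

Definition is_space (V : C -> Prop) : Prop :=
  is_Q_subspace V /\ Q_dim2 V /\
  exists u v, V u /\ V v /\ R_indep u v.

Definition is_CM (V : C -> Prop) : Prop :=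
  exists lam : C, ~ (exists q : R, is_rat q /\ lam = RtoC q) /\
    forall v, V v -> V (lam * v).

Definition line (v : C) : C -> Prop := fun z => exists r : R, z = RtoC r * v.

Definition arg_rat_pi (z : C) : Prop :=
  exists q : R, is_rat q /\ z = RtoC (Cmod z) * (cos (q * PI), sin (q * PI)).

Definition rational_angle (V : C -> Prop) (A : (C -> Prop) * (C -> Prop)) : Prop :=
  exists v1 v2 : C, V v1 /\ V v2 /\ v1 <> 0 /\ v2 <> 0 /\
    fst A = line v1 /\ snd A = line v2 /\ fst A <> snd A /\
    Im (v2 / v1) <> 0%R /\ arg_rat_pi (v2 / v1).

Definition finitely_many {T : Type} (P : T -> Prop) : Prop :=
  exists l : list T, forall x, P x -> In x l.

(* Main.v *)
Require Import Defs.
From Stdlib Require Import Reals List QArith Qreals Lra Lia ZArith Classical FunctionalExtensionality PropExtensionality.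
From Coquelicot Require Import Coquelicot.

Local Open Scope R_scope.

Lemma is_rat_Q (q : Q) : is_rat (Q2R q).
Proof. exists q; reflexivity. Qed.

Lemma is_rat_0 : is_rat 0.
Proof. exists 0%Q; unfold Q2R; simpl; lra. Qed.

Lemma is_rat_1 : is_rat 1.
Proof. exists 1%Q; unfold Q2R; simpl; lra. Qed.

Lemma is_rat_plus a b : is_rat a -> is_rat b -> is_rat (a + b).
Proof. intros [p ->] [q ->]; exists (p + q)%Q; now rewrite Q2R_plus. Qed.

Lemma is_rat_mult a b : is_rat a -> is_rat b -> is_rat (a * b).
Proof. intros [p ->] [q ->]; exists (p * q)%Q; now rewrite Q2R_mult. Qed.

Lemma is_rat_opp a : is_rat a -> is_rat (- a).
Proof. intros [p ->]; exists (- p)%Q; now rewrite Q2R_opp. Qed.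

Lemma is_rat_minus a b : is_rat a -> is_rat b -> is_rat (a - b).
Proof. intros; unfold Rminus; apply is_rat_plus; auto; now apply is_rat_opp. Qed.

Lemma is_rat_inv a : is_rat a -> is_rat (/ a).
Proof.
intros [p ->]. destruct (Qeq_dec p 0) as [E|E].
- exists 0%Q. rewrite (Qeq_eqR _ _ E). unfold Q2R; simpl. rewrite Rmult_0_l, Rinv_0. lra.
- exists (/ p)%Q. now rewrite Q2R_inv.
Qed.

Lemma is_rat_div a b : is_rat a -> is_rat b -> is_rat (a / b).
Proof. intros; unfold Rdiv; apply is_rat_mult; auto; now apply is_rat_inv. Qed.

Lemma is_rat_IZR z : is_rat (IZR z).
Proof. exists (inject_Z z). unfold Q2R; simpl. lra. Qed.

Definition qsub (S : R -> Prop) := S 0 /\ (forall x y, S x -> S y -> S (x + y)) /\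
  (forall a x, is_rat a -> S x -> S (a * x)).

Definition qspan (L : list R) (t : R) : Prop :=
  forall S, qsub S -> (forall x, In x L -> S x) -> S t.

Lemma qspan_qsub L : qsub (qspan L).
Proof.
split; [|split].
- intros S HS _; exact (proj1 HS).
- intros x y Hx Hy S HS HL. exact (proj1 (proj2 HS) _ _ (Hx S HS HL) (Hy S HS HL)).
- intros a x Ha Hx S HS HL. exact (proj2 (proj2 HS) _ _ Ha (Hx S HS HL)).
Qed.

Lemma qspan_in L x : In x L -> qspan L x.
Proof. intros H S _ HL; auto. Qed.

Lemma qspan_mono L1 L2 t : (forall x, In x L1 -> qspan L2 x) -> qspan L1 t -> qspan L2 t.
Proof. intros H Ht. apply Ht. apply qspan_qsub. exact H. Qed.

Lemma qspan_add L x y : qspan L x -> qspan L y -> qspan L (x + y).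
Proof. apply (proj1 (proj2 (qspan_qsub L))). Qed.

Lemma qspan_scal L a x : is_rat a -> qspan L x -> qspan L (a * x).
Proof. apply (proj2 (proj2 (qspan_qsub L))). Qed.

Lemma qspan_0 L : qspan L 0.
Proof. apply (proj1 (qspan_qsub L)). Qed.

Lemma qspan_nil t : qspan nil t -> t = 0.
Proof.
intros H; apply (H (fun x => x = 0)).
- split; [reflexivity|split].
  + intros x y -> ->; lra.
  + intros a x _ ->; lra.
- intros x [].
Qed.

Lemma qspan_cons h0 h t : qspan (h0 :: h) t ->
  exists a y, is_rat a /\ qspan h y /\ t = a * h0 + y.
Proof.
intros H; apply H.
- split; [|split].
  + exists 0, 0; split; [apply is_rat_0|split; [apply qspan_0|lra]].
  + intros x y [a [u [Ha [Hu ->]]]] [b [v [Hb [Hv ->]]]].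
    exists (a + b), (u + v); split; [now apply is_rat_plus|split; [now apply qspan_add|lra]].
  + intros c x Hc [a [u [Ha [Hu ->]]]].
    exists (c * a), (c * u); split; [now apply is_rat_mult|split; [now apply qspan_scal|lra]].
- intros x [<-|Hx].
  + exists 1, 0; split; [apply is_rat_1|split; [apply qspan_0|lra]].
  + exists 0, x; split; [apply is_rat_0|split; [now apply qspan_in|lra]].
Qed.

Lemma lift_list (T T' : R -> Prop) t0 :
  (forall x, T' x -> exists b, is_rat b /\ T (x + b * t0)) ->
  forall L', (forall x, In x L' -> T' x) ->
  exists L'', (forall x, In x L'' -> T x) /\ forall x, In x L' -> qspan (t0 :: L'') x.
Proof.
intros HT; induction L' as [|x L1 IH]; intros HL.
- exists nil; split; [intros _ []|intros _ []].
- destruct IH as [L'' [H1 H2]]; [intros; apply HL; now right|].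
  destruct (HT x (HL x (or_introl eq_refl))) as [b [Hb Hxb]].
  exists ((x + b * t0) :: L''); split.
  + intros y [<-|Hy]; auto.
  + intros y [<-|Hy].
    * set (u := x + b * t0). replace x with (u + (- b) * t0) by (unfold u; lra).
      apply qspan_add; [apply qspan_in; right; now left|].
      apply qspan_scal; [now apply is_rat_opp|apply qspan_in; now left].
    * apply qspan_mono with (t0 :: L''); [|now apply H2].
      intros z [<-|Hz]; apply qspan_in; [now left|right; now right].
Qed.

Lemma extract (h : list R) : forall T : R -> Prop, (forall t, T t -> qspan h t) ->
  exists L, (forall x, In x L -> T x) /\ forall t, T t -> qspan L t.
Proof.
induction h as [|h0 h IH]; intros T HT.
- exists nil; split; [intros _ []|].
  intros t Ht. rewrite (qspan_nil t (HT t Ht)). apply qspan_0.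
- destruct (classic (forall t, T t -> qspan h t)) as [Hall|Hnot].
  + apply IH; exact Hall.
  + apply not_all_ex_not in Hnot. destruct Hnot as [t0 Ht0].
    apply imply_to_and in Ht0. destruct Ht0 as [Tt0 Nt0].
    destruct (qspan_cons h0 h t0 (HT t0 Tt0)) as [a [y [Ha [Hy E0]]]].
    assert (a0 : a <> 0).
    { intros ->. apply Nt0. replace t0 with y by lra. exact Hy. }
    set (T' := fun x => qspan h x /\ exists b, is_rat b /\ T (x + b * t0)).
    destruct (IH T') as [L' [HL'1 HL'2]]; [intros x [Hx _]; exact Hx|].
    destruct (lift_list T T' t0) with L' as [L'' [H1 H2]].
    { intros x [_ Hx]; exact Hx. }
    { exact HL'1. }
    exists (t0 :: L''); split.
    * intros x [<-|Hx]; auto.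
    * intros t Tt.
      destruct (qspan_cons h0 h t (HT t Tt)) as [c [y' [Hc [Hy' Et]]]].
      set (x := t - (c / a) * t0).
      assert (T'x : T' x).
      { split.
        - replace x with (y' + (- (c / a)) * y).
          + apply qspan_add; auto. apply qspan_scal; auto.
            apply is_rat_opp, is_rat_div; auto.
          + unfold x; rewrite Et, E0; field; auto.
        - exists (c / a); split; [apply is_rat_div; auto|].
          replace (x + c / a * t0) with t by (unfold x; ring). exact Tt. }
      replace t with (x + (c / a) * t0) by (unfold x; ring).
      apply qspan_add.
      -- apply qspan_mono with L'; [exact H2|apply HL'2; exact T'x].
      -- apply qspan_scal; [apply is_rat_div; auto|apply qspan_in; now left].
Qed.

Lemma INR_pos n : (0 < n)%nat -> INR n <> 0.
Proof. intros H; apply not_0_INR; lia. Qed.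

Lemma common_exp (q : R) (z : Z) (d m : nat) : (0 < d)%nat -> (0 < m)%nat ->
  q * INR d = IZR z ->
  exists (k : nat) (b : Z), INR k * (2 / INR (d * m)) = 2 * q + 2 * IZR b.
Proof.
intros Hd Hm Hq.
set (a := (z * Z.of_nat m)%Z).
exists (Z.to_nat (a + Z.of_nat (d * m) * Z.abs a)), (Z.abs a).
assert (Hnn : (0 <= a + Z.of_nat (d * m) * Z.abs a)%Z).
{ assert (1 <= Z.of_nat (d * m))%Z by (rewrite Nat2Z.inj_mul; nia). nia. }
rewrite INR_IZR_INZ, Z2Nat.id by exact Hnn.
rewrite plus_IZR, mult_IZR, <- INR_IZR_INZ.
unfold a; rewrite mult_IZR, <- INR_IZR_INZ, <- Hq, mult_INR.
field. split; apply INR_pos; auto.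
Qed.

Lemma scale_exp k d N : (0 < d)%nat -> (0 < N)%nat ->
  INR (k * d) * (2 / INR (d * N)) = INR k * (2 / INR N).
Proof.
intros Hd HN. rewrite !mult_INR. field. split; apply INR_pos; auto.
Qed.

Lemma full_exp N : (0 < N)%nat -> INR N * (2 / INR N) = 2.
Proof. intros HN. field. apply INR_pos; auto. Qed.

Infix "+c" := Cplus (at level 50, left associativity).
Infix "*c" := Cmult (at level 40, left associativity).

Definition cross (p q : C) : R := fst p * snd q - snd p * fst q.
Definition dot (p q : C) : R := fst p * fst q + snd p * snd q.

Ltac cdestr := repeat match goal with [x : C |- _] => destruct x end.
Ltac ceq := apply injective_projections; simpl.

Lemma Rindep_of_cross p q : cross p q <> 0 -> R_indep p q.
Proof.
unfold cross, R_indep; intros H a b E.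
destruct p as [p1 p2], q as [q1 q2].
assert (E1 : a * p1 + b * q1 = 0) by (apply (f_equal fst) in E; simpl in E; lra).
assert (E2 : a * p2 + b * q2 = 0) by (apply (f_equal snd) in E; simpl in E; lra).
simpl in H.
assert (Ha : a * (p1 * q2 - p2 * q1) = 0).
{ replace (a * (p1 * q2 - p2 * q1)) with (q2 * (a * p1 + b * q1) - q1 * (a * p2 + b * q2)) by ring.
  rewrite E1, E2; ring. }
assert (Hb : b * (p1 * q2 - p2 * q1) = 0).
{ replace (b * (p1 * q2 - p2 * q1)) with (p1 * (a * p2 + b * q2) - p2 * (a * p1 + b * q1)) by ring.
  rewrite E1, E2; ring. }
split.
- destruct (Rmult_integral _ _ Ha); [auto|contradiction].
- destruct (Rmult_integral _ _ Hb); [auto|contradiction].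
Qed.

Lemma cross_of_Rindep p q : R_indep p q -> cross p q <> 0.
Proof.
unfold R_indep, cross; intros H Hc.
destruct p as [p1 p2], q as [q1 q2]; simpl in Hc.
destruct (H q2 (- p2)) as [E1 E2]; [ceq; nra|].
assert (q2 = 0) by lra. assert (p2 = 0) by lra. subst.
destruct (H q1 (- p1)) as [E3 E4]; [ceq; nra|].
assert (p1 = 0) by lra. assert (q1 = 0) by lra. subst.
destruct (H 1 0) as [E5 E6]; [ceq; lra|]. lra.
Qed.

Lemma line_scale k (u : C) : k <> 0 -> line (RtoC k *c u) = line u.
Proof.
intros Hk; unfold line; apply functional_extensionality; intro z;
apply propositional_extensionality; split; intros [r ->].
- exists (r * k); destruct u; ceq; ring.
- exists (r / k); destruct u; ceq; field; auto.
Qed.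

Lemma norm_nz (u : C) : u <> RtoC 0 -> fst u * fst u + snd u * snd u <> 0.
Proof.
intros Hu H; apply Hu; destruct u as [u1 u2]; simpl in H.
assert (u1 = 0) by nra. assert (u2 = 0) by nra. subst. reflexivity.
Qed.

Lemma cross0_line (u v : C) : u <> RtoC 0 -> v <> RtoC 0 -> cross u v = 0 -> line v = line u.
Proof.
intros Hu Hv Hc.
set (k := dot u v / (fst u * fst u + snd u * snd u)).
assert (Hn := norm_nz u Hu).
assert (E : v = RtoC k *c u).
{ unfold k, dot, cross in *; destruct u as [u1 u2], v as [v1 v2]; simpl in *.
  assert (H1 : (u1*v1 + u2*v2)*u1 = v1*(u1*u1+u2*u2) + u2*(u1*v2 - u2*v1)) by ring.
  assert (H2 : (u1*v1 + u2*v2)*u2 = v2*(u1*u1+u2*u2) - u1*(u1*v2 - u2*v1)) by ring.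
  rewrite Hc, Rmult_0_r in H1, H2.
  ceq.
  - replace v1 with ((u1*v1 + u2*v2)*u1 / (u1*u1+u2*u2)) at 1 by (rewrite H1; field; auto).
    field; auto.
  - replace v2 with ((u1*v1 + u2*v2)*u2 / (u1*u1+u2*u2)) at 1 by (rewrite H2; field; auto).
    field; auto. }
assert (Hk : k <> 0).
{ intros Hk; apply Hv; rewrite E, Hk; destruct u; ceq; ring. }
rewrite E; apply line_scale; auto.
Qed.

Lemma in_line_self (u : C) : line u u.
Proof. exists 1; destruct u; ceq; ring. Qed.

Lemma line_eq_mult (u v : C) : line u = line v -> exists r, u = RtoC r *c v.
Proof. intros E. assert (H := in_line_self u). rewrite E in H. exact H. Qed.

Definition coordb (w1 w2 : C) (V : C -> Prop) := forall v, V v ->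
  exists a b, is_rat a /\ is_rat b /\ v = RtoC a *c w1 +c RtoC b *c w2.

Lemma cross_lin a b c d (w1 w2 : C) :
  cross (RtoC a *c w1 +c RtoC b *c w2) (RtoC c *c w1 +c RtoC d *c w2) = (a * d - b * c) * cross w1 w2.
Proof. destruct w1, w2; unfold cross; simpl; ring. Qed.

Lemma dot_lin a b c d (w1 w2 : C) :
  dot (RtoC a *c w1 +c RtoC b *c w2) (RtoC c *c w1 +c RtoC d *c w2) =
  a * c * dot w1 w1 + (a * d + b * c) * dot w1 w2 + b * d * dot w2 w2.
Proof. destruct w1, w2; unfold dot; simpl; ring. Qed.

Lemma basis2 V (w1 w2 p q : C) : coordb w1 w2 V -> V p -> V q -> cross p q <> 0 ->
  forall v, V v -> exists al be, is_rat al /\ is_rat be /\ v = RtoC al *c p +c RtoC be *c q.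
Proof.
intros Hb Hp Hq Hc v Hv.
destruct (Hb p Hp) as [a [b [Ha [Hb' Ep]]]].
destruct (Hb q Hq) as [c [d [Hc' [Hd Eq]]]].
destruct (Hb v Hv) as [e [f [He [Hf Ev]]]].
rewrite Ep, Eq, cross_lin in Hc.
assert (HD : a * d - b * c <> 0) by (intro E; apply Hc; rewrite E; ring).
assert (HK : cross w1 w2 <> 0) by (intro E; apply Hc; rewrite E; ring).
exists ((e * d - c * f) / (a * d - b * c)), ((a * f - b * e) / (a * d - b * c)).
split; [|split].
- apply is_rat_div; [apply is_rat_minus; apply is_rat_mult|apply is_rat_minus; apply is_rat_mult]; auto.
- apply is_rat_div; [apply is_rat_minus; apply is_rat_mult|apply is_rat_minus; apply is_rat_mult]; auto.
- subst; destruct w1, w2; ceq; field; auto.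
Qed.

Lemma Im_div (v1 v2 : C) : v1 <> RtoC 0 ->
  Im (Cdiv v2 v1) = cross v1 v2 / (fst v1 * fst v1 + snd v1 * snd v1).
Proof.
intros H; assert (Hn := norm_nz v1 H); destruct v1 as [a b], v2 as [c d]; simpl in *.
unfold Cdiv, Cinv, Cmult, Im, cross; simpl; field; auto.
Qed.

Lemma Re_div (v1 v2 : C) : v1 <> RtoC 0 ->
  Re (Cdiv v2 v1) = dot v1 v2 / (fst v1 * fst v1 + snd v1 * snd v1).
Proof.
intros H; assert (Hn := norm_nz v1 H); destruct v1 as [a b], v2 as [c d]; simpl in *.
unfold Cdiv, Cinv, Cmult, Re, dot; simpl; field; auto.
Qed.

Lemma ra_cot (v1 v2 : C) : v1 <> RtoC 0 -> Im (Cdiv v2 v1) <> 0 -> arg_rat_pi (Cdiv v2 v1) ->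
  cross v1 v2 <> 0 /\
  exists q, is_rat q /\ (dot v1 v2 / cross v1 v2) * sin (q * PI) = cos (q * PI).
Proof.
intros H0 HI [q [Hq E]].
assert (Hn := norm_nz v1 H0).
assert (Ei := Im_div v1 v2 H0). assert (Er := Re_div v1 v2 H0).
set (w := Cdiv v2 v1) in *.
assert (E1 : Re w = Cmod w * cos (q * PI)) by (rewrite E at 1; unfold Re; simpl; ring).
assert (E2 : Im w = Cmod w * sin (q * PI)) by (rewrite E at 1; unfold Im; simpl; ring).
set (n := fst v1 * fst v1 + snd v1 * snd v1) in *.
assert (Hc : cross v1 v2 <> 0).
{ intro Hc; apply HI; rewrite Ei, Hc; unfold Rdiv; ring. }
split; auto. exists q; split; auto.
assert (Hd : dot v1 v2 = n * (Cmod w * cos (q * PI))) by (rewrite <- E1, Er; field; auto).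
assert (Hc' : cross v1 v2 = n * (Cmod w * sin (q * PI))) by (rewrite <- E2, Ei; field; auto).
assert (Hs : Cmod w * sin (q * PI) <> 0) by (rewrite <- E2; auto).
rewrite Hd, Hc'. field.
repeat split; auto; intro Z; apply Hs; rewrite Z; ring.
Qed.

Lemma ra_span (w1 w2 v1 v2 : C) a b c d :
  cross w1 w2 <> 0 ->
  v1 = RtoC a *c w1 +c RtoC b *c w2 -> v2 = RtoC c *c w1 +c RtoC d *c w2 ->
  is_rat a -> is_rat b -> is_rat c -> is_rat d -> cross v1 v2 <> 0 ->
  qspan (dot w1 w1 / cross w1 w2 :: dot w1 w2 / cross w1 w2 :: dot w2 w2 / cross w1 w2 :: nil)
    (dot v1 v2 / cross v1 v2).
Proof.
intros HK E1 E2 Ha Hb Hc Hd Hx.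
rewrite E1, E2, cross_lin in Hx.
assert (HD : a * d - b * c <> 0) by (intro E; apply Hx; rewrite E; ring).
rewrite E1, E2, cross_lin, dot_lin.
replace ((a * c * dot w1 w1 + (a * d + b * c) * dot w1 w2 + b * d * dot w2 w2) /
   ((a * d - b * c) * cross w1 w2)) with
  ((a * c / (a * d - b * c)) * (dot w1 w1 / cross w1 w2) +
   ((a * d + b * c) / (a * d - b * c)) * (dot w1 w2 / cross w1 w2) +
   (b * d / (a * d - b * c)) * (dot w2 w2 / cross w1 w2)) by (field; auto).
repeat apply qspan_add; apply qspan_scal;
  try (apply is_rat_div; [|apply is_rat_minus]; repeat apply is_rat_mult; repeat apply is_rat_plus;
       repeat apply is_rat_mult; auto);
  apply qspan_in; simpl; auto.
Qed.

Lemma ra_rep (v1 v2 : C) : v1 <> RtoC 0 -> cross v1 v2 <> 0 ->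
  v2 = RtoC (cross v1 v2 / (fst v1 * fst v1 + snd v1 * snd v1)) *c
       ((dot v1 v2 / cross v1 v2, 1) *c v1).
Proof.
intros H0 Hc; assert (Hn := norm_nz v1 H0).
destruct v1 as [a b], v2 as [c d]; unfold cross, dot in *; simpl in *.
ceq; field; auto.
Qed.

Definition cls (V : C -> Prop) (t : R) (A : (C -> Prop) * (C -> Prop)) :=
  exists u1 u2 s, V u1 /\ V u2 /\ u1 <> RtoC 0 /\ s <> 0 /\
    u2 = RtoC s *c ((t, 1) *c u1) /\ A = (line u1, line u2).

Lemma cls_unique V t A A' : cls V t A -> cls V t A' -> fst A = fst A' -> A = A'.
Proof.
intros [u1 [u2 [s [_ [_ [H1 [Hs [E2 EA]]]]]]]] [u1' [u2' [s' [_ [_ [H1' [Hs' [E2' EA']]]]]]]] H.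
subst A A'; simpl in H.
destruct (line_eq_mult u1 u1' H) as [r Er].
assert (Hr : r <> 0).
{ intro Z; apply H1; rewrite Er, Z; destruct u1'; ceq; ring. }
assert (E : u2 = RtoC (s * r / s') *c u2').
{ subst u2 u2' u1; destruct u1'; ceq; field; auto. }
rewrite H, E, line_scale; auto.
unfold Rdiv; intro Z. apply Rmult_integral in Z; destruct Z as [Z|Z].
- apply Rmult_integral in Z; destruct Z; auto.
- apply Rinv_neq_0_compat in Hs'; auto.
Qed.

Lemma coef_unique (p q : C) X Y X' Y' : cross p q <> 0 ->
  RtoC X *c p +c RtoC Y *c q = RtoC X' *c p +c RtoC Y' *c q -> X = X' /\ Y = Y'.
Proof.
intros Hc E.
destruct (Rindep_of_cross p q Hc (X - X') (Y - Y')) as [E1 E2].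
- destruct p, q; apply (f_equal fst) in E as Ef; apply (f_equal snd) in E as Es;
  simpl in *; ceq; lra.
- split; lra.
Qed.

Lemma Vcomb V a b x y : is_Q_subspace V -> is_rat a -> is_rat b -> V x -> V y ->
  V (RtoC a *c x +c RtoC b *c y).
Proof.
intros [H0 [HA HS]] Ha Hb Hx Hy. apply HA; apply HS; auto.
Qed.

Lemma cls_three V w1 w2 t A A' A'' : is_Q_subspace V -> coordb w1 w2 V -> ~ is_CM V ->
  cls V t A -> cls V t A' -> cls V t A'' ->
  fst A <> fst A' -> fst A <> fst A'' -> fst A' <> fst A'' -> False.
Proof.
intros HQ Hb HCM [u1 [u2 [s [V1 [V2 [H1 [Hs [E2 EA]]]]]]]]
  [u1' [u2' [s' [V1' [V2' [H1' [Hs' [E2' EA']]]]]]]]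
  [u1'' [u2'' [s'' [V1'' [V2'' [H1'' [Hs'' [E2'' EA'']]]]]]]] N1 N2 N3.
subst A A' A''; simpl in N1, N2, N3.
assert (C1 : cross u1 u1' <> 0) by (intro Z; apply N1; symmetry; apply cross0_line; auto).
assert (C2 : cross u1 u1'' <> 0) by (intro Z; apply N2; symmetry; apply cross0_line; auto).
assert (C3 : cross u1' u1'' <> 0) by (intro Z; apply N3; symmetry; apply cross0_line; auto).
assert (C4 : cross u2 u2' <> 0).
{ replace (cross u2 u2') with (s * s' * (t * t + 1) * cross u1 u1').
  - intro Z. apply Rmult_integral in Z; destruct Z as [Z|Z]; auto.
    apply Rmult_integral in Z; destruct Z as [Z|Z].
    + apply Rmult_integral in Z; destruct Z; auto.
    + nra.
  - subst u2 u2'; destruct u1, u1'; unfold cross; simpl; ring. }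
destruct (basis2 V w1 w2 u1 u1' Hb V1 V1' C1 u1'' V1'') as [al [be [Hal [Hbe E1'']]]].
destruct (basis2 V w1 w2 u2 u2' Hb V2 V2' C4 u2'' V2'') as [al2 [be2 [Hal2 [Hbe2 E2x]]]].
assert (Hal0 : al <> 0).
{ intro Z; apply C3; rewrite E1'', Z; destruct u1, u1'; unfold cross; simpl; ring. }
assert (Hbe0 : be <> 0).
{ intro Z; apply C2; rewrite E1'', Z; destruct u1, u1'; unfold cross; simpl; ring. }
(* the two expressions of lambda * u1'' *)
assert (EQ : RtoC (s / s'' * al2) *c u2 +c RtoC (s / s'' * be2) *c u2' =
             RtoC al *c u2 +c RtoC (be * (s / s')) *c u2').
{ assert (L1 : RtoC (s / s'' * al2) *c u2 +c RtoC (s / s'' * be2) *c u2' =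
               RtoC (s / s'') *c u2'').
  { rewrite E2x; destruct u2, u2'; ceq; ring. }
  rewrite L1, E2'', E1'', E2, E2'.
  destruct u1, u1'; ceq; field; auto. }
destruct (coef_unique u2 u2' _ _ _ _ C4 EQ) as [EX EY].
assert (Hal20 : al2 <> 0).
{ intro Z; rewrite Z, Rmult_0_r in EX; auto. }
assert (Rss'' : is_rat (s / s'')).
{ replace (s / s'') with (al / al2) by (rewrite <- EX; field; auto).
  apply is_rat_div; auto. }
assert (Rss' : is_rat (s / s')).
{ replace (s / s') with (s / s'' * be2 / be) by (rewrite EY; field; auto).
  apply is_rat_div; auto. apply is_rat_mult; auto. }
apply HCM. exists (RtoC s *c (t, 1)). split.
- intros [q [_ Eq]]. apply (f_equal snd) in Eq. simpl in Eq. lra.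
- intros v Hv.
  destruct (basis2 V w1 w2 u1 u1' Hb V1 V1' C1 v Hv) as [ga [de [Hga [Hde Ev]]]].
  replace ((RtoC s *c (t, 1)) *c v) with (RtoC ga *c u2 +c RtoC (de * (s / s')) *c u2').
  + apply Vcomb; auto. apply is_rat_mult; auto.
  + rewrite Ev, E2, E2'; destruct u1, u1'; ceq; field; auto.
Qed.

Lemma three_finite {T : Type} (P : T -> Prop) :
  (forall x y z, P x -> P y -> P z -> x = y \/ x = z \/ y = z) -> finitely_many P.
Proof.
intros H.
destruct (classic (exists x, P x)) as [[x Px]|Hno].
- destruct (classic (exists y, P y /\ y <> x)) as [[y [Py Nyx]]|Hno2].
  + exists (x :: y :: nil). intros z Pz.
    destruct (H x y z Px Py Pz) as [E|[E|E]].
    * exfalso; auto.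
    * left; auto.
    * right; left; auto.
  + exists (x :: nil). intros z Pz. left.
    destruct (classic (z = x)) as [E|E]; [auto|exfalso; apply Hno2; exists z; auto].
- exists nil. intros z Pz. exfalso; apply Hno; exists z; auto.
Qed.

Lemma union_finite {A T : Type} (l : list A) (P : A -> T -> Prop) :
  (forall a, In a l -> finitely_many (P a)) ->
  finitely_many (fun x => exists a, In a l /\ P a x).
Proof.
induction l as [|a l IH]; intros H.
- exists nil. intros x [a [[] _]].
- destruct (H a (or_introl eq_refl)) as [l1 H1].
  destruct IH as [l2 H2]; [intros b Hb; apply H; right; auto|].
  exists (l1 ++ l2). intros x [b [[<-|Hb] Hx]]; apply in_or_app; [left; auto|right].
  apply H2; exists b; auto.
Qed.

Lemma finite_mono {T : Type} (P Q : T -> Prop) :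
  (forall x, P x -> Q x) -> finitely_many Q -> finitely_many P.
Proof. intros H [l Hl]; exists l; auto. Qed.

Lemma main_from_B (V : C -> Prop) :
  is_space V -> ~ is_CM V ->
  (forall h : list R, finitely_many (fun t => qspan h t /\
       exists q, is_rat q /\ t * sin (q * PI) = cos (q * PI))) ->
  finitely_many (rational_angle V).
Proof.
intros [HQ [[w1 [w2 [Vw1 [Vw2 [_ Hsp]]]]] [u [v [Vu [Vv Huv]]]]]] HCM HB.
assert (Hb : coordb w1 w2 V) by exact Hsp.
assert (HK : cross w1 w2 <> 0).
{ apply cross_of_Rindep in Huv.
  destruct (Hb u Vu) as [a [b [_ [_ Eu]]]]. destruct (Hb v Vv) as [c [d [_ [_ Ev]]]].
  rewrite Eu, Ev, cross_lin in Huv. intro Z; apply Huv; rewrite Z; ring. }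
set (h := dot w1 w1 / cross w1 w2 :: dot w1 w2 / cross w1 w2 :: dot w2 w2 / cross w1 w2 :: nil).
destruct (HB h) as [lT HlT].
apply finite_mono with (fun A => exists t, In t lT /\ cls V t A).
- intros A [v1 [v2 [V1 [V2 [N1 [N2 [F1 [F2 [_ [HI Harg]]]]]]]]]].
  destruct (ra_cot v1 v2 N1 HI Harg) as [Hc Hcot].
  exists (dot v1 v2 / cross v1 v2); split.
  + apply HlT; split; auto.
    destruct (Hb v1 V1) as [a [b [Ha [Hb1 E1]]]]. destruct (Hb v2 V2) as [c [d [Hc1 [Hd E2]]]].
    apply (ra_span w1 w2 v1 v2 a b c d); auto.
  + exists v1, v2, (cross v1 v2 / (fst v1 * fst v1 + snd v1 * snd v1)).
    split; auto. split; auto. split; auto. split.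
    * assert (Hn := norm_nz v1 N1). unfold Rdiv; intro Z.
      apply Rmult_integral in Z; destruct Z as [Z|Z]; auto.
      apply Rinv_neq_0_compat in Hn; auto.
    * split; [apply ra_rep; auto|].
      destruct A; simpl in *; subst; auto.
- apply union_finite. intros t _.
  apply three_finite. intros x y z Hx Hy Hz.
  destruct (classic (fst x = fst y)) as [E1|E1]; [left; apply cls_unique with V t; auto|].
  destruct (classic (fst x = fst z)) as [E2|E2]; [right; left; apply cls_unique with V t; auto|].
  destruct (classic (fst y = fst z)) as [E3|E3]; [right; right; apply cls_unique with V t; auto|].
  exfalso; apply (cls_three V w1 w2 t x y z); auto.
Qed.
Local Close Scope R_scope. Local Close Scope Q_scope. Local Close Scope C_scope.
From HB Require Import structures.
From mathcomp Require Import all_boot all_order all_algebra all_field.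
From mathcomp Require Import complex Rstruct.
From mathcomp Require Import zify ring lra.
Import Order.TTheory GRing.Theory Num.Theory.

Set Implicit Arguments. Unset Strict Implicit. Unset Printing Implicit Defensive.
Lemma totient_bound m N : (0 < m)%N -> (totient m <= N)%N -> (m %| (2*N)`!)%N.
Proof.
move=> m0 hN; apply/(dvdn_partP _ m0) => p pin.
have pr : prime p by move: pin; rewrite mem_primes => /andP[].
have e0 : 0 < logn p m by rewrite logn_gt0.
rewrite p_part; apply: dvdn_fact; rewrite expn_gt0 prime_gt0 //=.
have hm : totient (p ^ logn p m) <= N.
  apply: leq_trans hN.
  rewrite -{2}(partnC p m0) totient_coprime ?coprime_partC // p_part.
  by rewrite leq_pmulr // totient_gt0 part_gt0.
rewrite totient_pfactor // in hm.
have p2 := prime_gt1 pr.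
move: hm; case: (logn p m) e0 => // e _ /=; rewrite expnS.
move: (p ^ e) (expn_gt0 p e) => k k0; nia.
Qed.
Section NT.
Local Open Scope ring_scope.
Lemma phi_root (F : numFieldType) (z : F) m :
  m.-primitive_root z -> root (map_poly (intr : int -> F) 'Phi_m) z.
Proof.
move=> pz; have m0 := prim_order_gt0 pz.
have h1 : root (\prod_(d <- divisors m) map_poly (intr : int -> F) 'Phi_d) z.
  rewrite -rmorph_prod prod_Cyclotomic // rmorphB /= rmorph1 map_polyXn.
  by rewrite /root !hornerE prim_expr_order // subrr.
have : ~~ all (fun p => ~~ root p z) [seq map_poly (intr : int -> F) 'Phi_d | d <- divisors m].
  by rewrite -root_bigmul big_map negbK.
case/allPn => p /mapP[d dd ->]; rewrite negbK => rd.
have dm : (d %| m)%N by rewrite dvdn_divisors.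
have d0 : (0 < d)%N by apply: dvdn_gt0 dm.
have zd : z ^+ d = 1.
  have e : \prod_(e <- divisors d) map_poly (intr : int -> F) 'Phi_e = 'X^d - 1.
    by rewrite -rmorph_prod prod_Cyclotomic // rmorphB /= rmorph1 map_polyXn.
  have : root (\prod_(e <- divisors d) map_poly (intr : int -> F) 'Phi_e) z.
    rewrite (big_rem d); last by rewrite -dvdn_divisors.
    by rewrite rootM rd.
  by rewrite e /root !hornerE subr_eq0 => /eqP.
have md : (m %| d)%N by rewrite (prim_order_dvd pz) zd.
by have -> : m = d by apply/eqP; rewrite eqn_dvd md dm.
Qed.

Lemma deg_root_unity (F : numFieldType) (z : F) m (P : {poly rat}) :
  m.-primitive_root z -> P != 0 -> root (map_poly ratr P) z ->
  (totient m < size P)%N.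
Proof.
move=> pz P0 rP; have m0 := prim_order_gt0 pz.
pose Phi : {poly rat} := map_poly intr 'Phi_m.
have hPhi : forall (K : numFieldType), map_poly (ratr : rat -> K) Phi = map_poly intr 'Phi_m.
  move=> K; rewrite /Phi -map_poly_comp; apply: eq_map_poly => a /=.
  by rewrite ratr_int.
pose g := gcdp P Phi.
have rg : root (map_poly (ratr : rat -> F) g) z.
  by rewrite /g gcdp_map root_gcd rP hPhi phi_root.
have sg : size g != 1%N.
  apply/negP => /eqP sg1.
  have [c c0 gc] : exists2 c, c != 0 & g = c%:P.
    have gE := size1_polyC (eq_leq sg1).
    exists (g`_0); last exact: gE.
    by apply/eqP => e; move: sg1; rewrite gE e size_polyC eqxx.
  by move: rg; rewrite gc map_polyC /root hornerC fmorph_eq0 (negbTE c0).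
have sgC : size (map_poly (ratr : rat -> algC) g) != 1%N by rewrite size_map_poly.
have [x rx] := closed_rootP _ sgC.
have px : m.-primitive_root x.
  have [z0 pz0] := C_prim_root_exists m0.
  rewrite -(root_cyclotomic pz0) -(Cintr_Cyclotomic pz0) -hPhi.
  apply: root_dvdp rx; rewrite dvdp_map; exact: dvdp_gcdr.
have [p [Dp _] dvp] := minCpolyP x.
have pg : p %| g by rewrite -dvp.
have pP : p %| P by apply: dvdp_trans pg (dvdp_gcdl _ _).
have := dvdp_leq P0 pP.
have -> : size p = (totient m).+1.
  by rewrite -(size_map_poly (ratr : rat -> algC)) -Dp (minCpoly_cyclotomic px) size_cyclotomic.
by [].
Qed.
Lemma alg_deg (F : numFieldType) (eta zeta : F) (N : nat) (pa pb : {poly rat}) :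
  (0 < N)%N -> eta ^+ N = 1 -> (map_poly ratr pa).[eta] != 0 ->
  zeta * (map_poly ratr pa).[eta] = (map_poly ratr pb).[eta] ->
  exists P : {poly rat}, P != 0 /\ (size P <= N.+1)%N /\ root (map_poly ratr P) zeta.
Proof.
move=> N0 eN A0 hz.
pose ev (p : {poly rat}) := (map_poly (ratr : rat -> F) p).[eta].
have evM : forall p q, ev (p * q) = ev p * ev q.
  by move=> p q; rewrite /ev rmorphM /= hornerM.
have evX : forall p k, ev (p ^+ k) = ev p ^+ k.
  by move=> p k; rewrite /ev rmorphXn /= horner_exp.
pose d : {poly rat} := 'X^N - 1%:P.
have d0 : d != 0 by rewrite -size_poly_eq0 size_XnsubC.
have evd : ev d = 0 by rewrite /ev /d rmorphB /= map_polyXn map_polyC /= rmorph1 !hornerE eN subrr.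
have evmod : forall p, ev (p %% d) = ev p.
  move=> p; rewrite {2}(divp_eq p d) /ev rmorphD /= hornerD -/(ev _) -/(ev _) -/(ev _).
  by rewrite evM evd mulr0 add0r.
pose r k := (pb ^+ k * pa ^+ (N - k)) %% d.
have sr : forall k, (size (r k) <= N)%N.
  move=> k; have := ltn_modpN0 (pb ^+ k * pa ^+ (N - k)) d0.
  by rewrite size_XnsubC.
pose M : 'M[rat]_(N.+1, N) := \matrix_(k, i) (r k)`_i.
pose K := kermx M.
have K0 : K != 0.
  rewrite -mxrank_eq0 /K mxrank_ker.
  have := rank_leq_col M; lia.
have [i hi] : exists i, row i K != 0.
  apply/existsP; apply: contraR K0 => /existsPn h.
  apply/eqP/row_matrixP => i; rewrite row0; apply/eqP.
  by move: (h i); rewrite negbK.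
pose c := row i K.
have cM : c *m M = 0 by rewrite /c -row_mul mulmx_ker row0.
pose P : {poly rat} := \poly_(k < N.+1) c 0 (inord k).
exists P; split; last split.
- apply: contraNneq hi => P0; apply/eqP/rowP => k.
  rewrite mxE; have := congr1 (fun p : {poly rat} => p`_k) P0.
  by rewrite /P coef_poly ltn_ord coef0 inord_val !mxE.
- exact: size_poly.
have sP : (size (map_poly (ratr : rat -> F) P) <= N.+1)%N.
  by rewrite size_map_poly size_poly.
rewrite /root (horner_coef_wide _ sP).
pose A := ev pa.
have AN0 : A ^+ N != 0 by rewrite expf_neq0.
apply/eqP; apply: (mulIf AN0); rewrite mul0r mulr_suml.
have e1 : forall k : 'I_N.+1,
  (map_poly (ratr : rat -> F) P)`_k * zeta ^+ k * A ^+ N = ratr (c 0 k) * ev (r k).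
  move=> k; rewrite coef_map /= coef_poly ltn_ord inord_val evmod evM !evX.
  rewrite -mulrA; congr (_ * _).
  have kN : (k <= N)%N by rewrite -ltnS ltn_ord.
  rewrite (_ : A ^+ N = A ^+ k * A ^+ (N - k)); last by rewrite -exprD subnKC.
  by rewrite mulrA -exprMn /A /ev hz.
under eq_bigr do rewrite e1.
have e2 : forall k : 'I_N.+1, ev (r k) = \sum_(j < N) ratr (M k j) * eta ^+ j.
  move=> k; rewrite /ev (horner_coef_wide _ (_ : size _ <= N)%N); last first.
    by rewrite size_map_poly sr.
  by apply: eq_bigr => j _; rewrite coef_map mxE.
under eq_bigr do rewrite e2 mulr_sumr.
rewrite exchange_big /=; apply: big1 => j _.
under eq_bigr do rewrite mulrA. rewrite -mulr_suml.
have : (c *m M) 0 j = 0 by rewrite cM mxE.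
rewrite mxE => h.
have -> : \sum_(k < N.+1) ratr (c 0 k) * ratr (M k j) = ratr (\sum_(k < N.+1) c 0 k * M k j) :> F.
  by rewrite rmorph_sum; apply: eq_bigr => k _; rewrite rmorphM.
by rewrite h rmorph0 mul0r.
Qed.
End NT.
Section SB.
Local Open Scope ring_scope.
Notation CR := (complex R).
Ltac mc := rewrite ?RplusE ?RmultE ?RminusE ?RoppE ?RdivE ?RinvE ?R1E ?R0E ?IZRposE ?INRE; rewrite ?[nat_of_pos _]/=.

Definition ee (x : R) : CR := Complex (cos (x * PI)) (sin (x * PI)).

Lemma ee_mul x y : ee x * ee y = ee (x + y).
Proof.
rewrite /ee !RmultE !RplusE mulrDl cosD sinD; apply/eqP; rewrite eq_complex /=; apply/andP; split; apply/eqP; ring.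
Qed.

Lemma ee0 : ee 0 = 1.
Proof. by rewrite /ee Rmult_0_l cos_0 sin_0. Qed.

Lemma ee2 : ee 2 = 1.
Proof. by rewrite /ee cos_2PI sin_2PI. Qed.

Lemma ee_exp x n : ee x ^+ n = ee (INR n * x).
Proof.
elim: n => [|n IH]; first by rewrite expr0 Rmult_0_l ee0.
rewrite exprS IH ee_mul S_INR; congr ee; mc; ring.
Qed.

Lemma ee_int (z : Z) : ee (2 * IZR z) = 1.
Proof.
have hp : forall p, ee (2 * IZR (Zpos p)) = 1.
  move=> p; rewrite -(positive_nat_Z p) -INR_IZR_INZ Rmult_comm -ee_exp ee2 expr1n //.
case: z => [|p|p]; first by rewrite Rmult_0_r ee0.
  exact: hp.
have h : ee (2 * IZR (Zneg p)) * ee (2 * IZR (Zpos p)) = 1.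
  rewrite ee_mul -ee0; congr ee. rewrite [IZR (Zneg p)]/IZR [IZR (Zpos p)]/IZR; mc; ring.
by move: h; rewrite hp mulr1.
Qed.

Lemma sin2cos2 x : sin x ^+ 2 + cos x ^+ 2 = 1.
Proof. by have := sin2_cos2 x; rewrite /Rsqr; mc; rewrite !expr2. Qed.

Lemma cot_rel t q : t * sin (q * PI) = cos (q * PI) ->
  Complex t 0 * (ee (2 * q) - 1) = 'i%C * (ee (2 * q) + 1).
Proof.
move=> h.
have e2 : ee (2 * q) = ee q * ee q by rewrite ee_mul; congr ee; mc; ring.
have h1 := sin2cos2 (q * PI).
rewrite e2 /ee.
move: h h1; set s := sin _; set c := cos _ => h h1.
rewrite -h in h1 *.
apply/eqP; rewrite eq_complex /=; apply/andP; split; rewrite -subr_eq0; apply/eqP.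
  transitivity (t * (s ^+ 2 + (t * s) ^+ 2 - 1)); first ring.
  by rewrite h1 subrr mulr0.
transitivity (s ^+ 2 + (t * s) ^+ 2 - 1); first ring.
by rewrite h1 subrr.
Qed.

Definition zint (z : Z) : int :=
  match z with Z0 => 0 | Zpos p => Posz (nat_of_pos p) | Zneg p => - Posz (nat_of_pos p) end.

Lemma IZR_zint z : IZR z = (zint z)%:~R.
Proof.
case: z => [|p|p] //=; first by rewrite IZRposE INRE.
by rewrite (_ : IZR (Zneg p) = - IZR (Zpos p)) // IZRposE INRE mulrNz.
Qed.

Lemma rat_ratr x : is_rat x -> exists r : rat, x = ratr r.
Proof.
case=> q ->; exists ((zint (Qnum q))%:~R / (zint (Zpos (Qden q)))%:~R).
rewrite /Q2R RmultE RinvE !IZR_zint rmorphM /= fmorphV /= !ratr_int //.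
Qed.

Lemma rat_frac x : is_rat x -> exists (z : Z) (d : nat), (0 < d)%N /\ x * INR d = IZR z.
Proof.
case=> q ->; exists (Qnum q), (Pos.to_nat (Qden q)); split.
  by apply/ssrnat.ltP; apply: Pos2Nat.is_pos.
rewrite /Q2R INR_IZR_INZ positive_nat_Z RmultE RinvE -mulrA mulVf ?mulr1 //.
by apply/eqP; apply: not_0_IZR.
Qed.

Lemma ee_root x : is_rat x -> exists d : nat, (0 < d)%N /\ ee (2 * x) ^+ d = 1.
Proof.
case/rat_frac => z [d [d0 h]]; exists d; split => //.
rewrite ee_exp.
have -> : ee (INR d * (2 * x)) = ee (2 * IZR z) by congr ee; rewrite -h; mc; ring.
exact: ee_int.
Qed.

Definition eta (N : nat) : CR := ee (2 / INR N).

Lemma common_root (L : list R) :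
  (forall t, In t L -> exists q, is_rat q /\ t * sin (q * PI) = cos (q * PI)) ->
  exists N, (0 < N)%N /\ forall t, In t L ->
    exists k, Complex t 0 * (eta N ^+ k - 1) = 'i%C * (eta N ^+ k + 1).
Proof.
elim: L => [|t L IH] H.
  by exists 1%N; split => // t [].
have [N0 [N00 HN0]] := IH (fun x hx => H x (or_intror hx)).
have [q [qr hq]] := H t (or_introl erefl).
have [z [d [d0 hd]]] := rat_frac qr.
exists (Nat.mul d N0); split.
  by rewrite -/(muln d N0) muln_gt0 d0 N00.
have d0' : (0 < d)%coq_nat by apply/ssrnat.ltP.
have N00' : (0 < N0)%coq_nat by apply/ssrnat.ltP.
move=> x [<-|hx].
  have [k [b hk]] := common_exp q z d N0 d0' N00' hd.
  exists k; rewrite /eta ee_exp hk -ee_mul ee_int mulr1.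
  exact: cot_rel.
have [k hk] := HN0 x hx.
exists (Nat.mul k d); rewrite /eta ee_exp scale_exp; last 2 first.
- exact: d0'.
- exact: N00'.
by rewrite -ee_exp.
Qed.

Definition Qeta N (x : CR) := exists p : {poly rat}, x = (map_poly ratr p).[eta N].

Lemma Qeta_add N x y : Qeta N x -> Qeta N y -> Qeta N (x + y).
Proof. by move=> [p ->] [q ->]; exists (p + q); rewrite rmorphD hornerD. Qed.

Lemma Qeta_sub N x y : Qeta N x -> Qeta N y -> Qeta N (x - y).
Proof. by move=> [p ->] [q ->]; exists (p - q); rewrite rmorphB hornerD hornerN. Qed.

Lemma Qeta_mul N x y : Qeta N x -> Qeta N y -> Qeta N (x * y).
Proof. by move=> [p ->] [q ->]; exists (p * q); rewrite rmorphM hornerM. Qed.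

Lemma Qeta_rat N r : Qeta N (ratr r).
Proof. by exists r%:P; rewrite map_polyC hornerC. Qed.

Lemma Qeta_pow N k : Qeta N (eta N ^+ k).
Proof. by exists 'X^k; rewrite map_polyXn hornerXn. Qed.

Lemma Qeta_1 N : Qeta N 1.
Proof. by have := Qeta_rat N 1; rewrite rmorph1. Qed.

Lemma Qeta_0 N : Qeta N 0.
Proof. by have := Qeta_rat N 0; rewrite rmorph0. Qed.

Lemma rc_ratr (r : rat) : (ratr r : R)%:C%C = ratr r :> CR.
Proof. exact: (fmorph_rat (real_complex R)). Qed.

Lemma qspan_rel N L :
  (forall t, In t L -> exists k, Complex t 0 * (eta N ^+ k - 1) = 'i%C * (eta N ^+ k + 1)) ->
  forall t, qspan L t -> exists G P, Qeta N G /\ Qeta N P /\ P != 0 /\ Complex t 0 * P = 'i%C * G.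
Proof.
move=> HL t ht.
pose S := fun t : R => exists G P, Qeta N G /\ Qeta N P /\ P != 0 /\ Complex t 0 * P = 'i%C * G.
apply: (ht S); last first.
  move=> x /HL [k hk]; exists (eta N ^+ k + 1), (eta N ^+ k - 1).
  split; first by apply: Qeta_add; [apply: Qeta_pow | apply: Qeta_1].
  split; first by apply: Qeta_sub; [apply: Qeta_pow | apply: Qeta_1].
  split => //; apply/eqP => e; move: hk.
  have -> : eta N ^+ k = 1 by apply/eqP; rewrite -subr_eq0 e.
  rewrite subrr mulr0 => /esym/eqP; rewrite mulf_eq0 (negbTE (neq0Ci _)) /=.
  by rewrite -mulr2n pnatr_eq0.
split; last split.
- exists 0, 1; split; first exact: Qeta_0.
  split; first by apply: Qeta_1.
  by split; [exact: oner_neq0 | rewrite mulr1 mulr0 R0E].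
- move=> x y [G1 [P1 [g1 [p1 [n1 e1]]]]] [G2 [P2 [g2 [p2 [n2 e2]]]]].
  exists (G1 * P2 + G2 * P1), (P1 * P2).
  split; first by apply: Qeta_add; apply: Qeta_mul.
  split; first by apply: Qeta_mul.
  split; first by rewrite mulf_neq0.
  have -> : Complex (x + y)%R 0 = Complex x 0 + Complex y 0.
    by apply/eqP; rewrite eq_complex /= addr0 !eqxx.
  by rewrite mulrDl mulrA e1 (mulrC P1) mulrA e2 mulrDr !mulrA.
- move=> a x /rat_ratr [r ->] [G [P [g [p [n e]]]]].
  exists (ratr r * G), P.
  split; first by apply: Qeta_mul => //; apply: Qeta_rat.
  split => //; split => //.
  have -> : Complex (ratr r * x)%R 0 = ratr r * Complex x 0.
    by rewrite -rc_ratr; apply/eqP; rewrite eq_complex /=; apply/andP; split; apply/eqP; ring.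
  by rewrite -mulrA e mulrCA.
Qed.

Lemma memIn (T : eqType) (x : T) (s : seq T) : x \in s -> In x s.
Proof.
elim: s => //= y s IH; rewrite in_cons => /orP [/eqP ->|/IH]; auto.
Qed.

Lemma eta_N N : (0 < N)%N -> eta N ^+ N = 1.
Proof.
move=> N0; rewrite /eta ee_exp full_exp ?ee2 //; exact/ssrnat.ltP.
Qed.

Lemma stepB_core (L : list R) :
  (forall t, In t L -> exists q, is_rat q /\ t * sin (q * PI) = cos (q * PI)) ->
  exists l : list R, forall t, qspan L t ->
    (exists q, is_rat q /\ t * sin (q * PI) = cos (q * PI)) -> In t l.
Proof.
move=> HL; have [N [N0 HN]] := common_root HL.
pose M := ((2 * N)`!)%N.
have [rs Hrs] := closed_field_poly_normal ('X^M - 1 : {poly CR}).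
exists (map (fun z : CR => complex.Re ('i%C * (z + 1) / (z - 1))) rs).
move=> t ht [q [qr hq]].
have [d [d0 hd]] := ee_root qr.
have rel := cot_rel hq.
move: rel hd; set z := ee (2 * q) => rel hd.
have [G [P [[pg eG] [[pp eP] [P0 eGP]]]]] := qspan_rel HN ht.
have i0 : 'i%C != 0 :> CR by exact: neq0Ci.
have two0 : (1 + 1 : CR) != 0 by rewrite -mulr2n pnatr_eq0.
have z1 : z - 1 != 0.
  apply/negP; rewrite subr_eq0 => /eqP z1; move: rel; rewrite z1 subrr mulr0.
  by move/esym/eqP; rewrite mulf_eq0 (negbTE i0) (negbTE two0).
have h1 : 'i%C * (G * (z - 1)) = 'i%C * (P * (z + 1)).
  by rewrite mulrA -eGP mulrAC rel; ring.
have h2 := mulfI i0 h1.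
have key : z * (G - P) = G + P.
  apply/eqP; rewrite -subr_eq0; apply/eqP.
  transitivity (G * (z - 1) - P * (z + 1)); first ring.
  by rewrite h2 subrr.
have A0 : G - P != 0.
  apply/negP; rewrite subr_eq0 => /eqP GP; move: key; rewrite GP subrr mulr0.
  move/esym/eqP; rewrite -mulr2n -mulr_natl mulf_eq0 pnatr_eq0 /=.
  by rewrite (negbTE P0).
have hA : (map_poly ratr (pg - pp)).[eta N] = G - P.
  by rewrite rmorphB hornerD hornerN -eG -eP.
have hB : (map_poly ratr (pg + pp)).[eta N] = G + P.
  by rewrite rmorphD hornerD -eG -eP.
have A0' : (map_poly (ratr : rat -> CR) (pg - pp)).[eta N] != 0 by rewrite hA.
have key' : z * (map_poly ratr (pg - pp)).[eta N] = (map_poly ratr (pg + pp)).[eta N].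
  by rewrite hA hB.
have [Pz [Pz0 [sPz rPz]]] := alg_deg N0 (eta_N N0) A0' key'.
have [m pm md] := prim_order_exists d0 hd.
have tm := deg_root_unity pm Pz0 rPz.
have tmN : (totient m <= N)%N by have := leq_trans tm sPz; rewrite ltnS.
have mM : (m %| M)%N := totient_bound (prim_order_gt0 pm) tmN.
have zM : z ^+ M = 1 by apply/eqP; rewrite -(prim_order_dvd pm).
have zin : z \in rs.
  have : root ('X^M - 1) z by rewrite /root !hornerE zM subrr.
  rewrite Hrs rootZ; last by rewrite lead_coef_eq0 -size_poly_eq0 size_XnsubC ?fact_gt0.
  by rewrite root_prod_XsubC.
apply: memIn.
have -> : t = complex.Re ('i%C * (z + 1) / (z - 1)).
  have : Complex t 0 = 'i%C * (z + 1) / (z - 1) by rewrite -rel mulfK.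
  by move=> <-.
by apply: map_f.
Qed.
End SB.

Lemma stepB (h : list R) : finitely_many (fun t => qspan h t /\
       exists q, is_rat q /\ Rmult t (sin (Rmult q PI)) = cos (Rmult q PI)).
Proof.
have [L [HL1 HL2]] := extract h (fun t => qspan h t /\
       exists q, is_rat q /\ Rmult t (sin (Rmult q PI)) = cos (Rmult q PI)) (fun t ht => proj1 ht).
have [l Hl] := stepB_core (fun t ht => proj2 (HL1 t ht)).
by exists l => t [ht hq]; apply: Hl => //; apply: HL2.
Qed.

Theorem theorem4p3 (V : C -> Prop) :
  is_space V -> ~ is_CM V -> finitely_many (rational_angle V).
Proof.
intros H1 H2. apply (main_from_B V H1 H2). intro h. exact (stepB h).
Qed.
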